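(* Let $p$ be an odd Ramanujan prime. Write $p=p_n$ and let $q$ be the smallest prime greater than $p/2$. Then all integers $\frac{p+1}{2},\frac{p+3}{2},\dots,\frac{p_{n+1}-1}{2}$ are composite, and the open interval $(p,2q)$ contains a prime.
   Context: $p_k$ denotes the $k$-th prime and $\pi(x)$ the number of primes $\le x$. For $n\ge 1$, the $n$-th Ramanujan prime $R_n$ is the smallest positive integer such that $\pi(x)-\pi(x/2)\ge n$ for all real $x\ge R_n$. A Ramanujan prime is a number of the form $R_n$ (these are primes: $2,11,17,29,41,\dots$). *)

(* Defs.v *)
From Stdlib Require Import Reals.
From mathcomp Require Import all_boot.

Set Implicit Arguments.
Unset Strict Implicit.
Unset Printing Implicit Defensive.

(* pi(x) = number of primes k with k <= x, for real x.
   Every such k is < up x (up x > x), so enumerating 0 .. up x - 1 suffices. *)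
Definition primepi (x : R) : nat :=
  count (fun k => prime k && (if Rle_dec (INR k) x then true else false))
        (iota 0 (Z.to_nat (up x))).

Definition is_kth_prime (k p : nat) : Prop := prime p /\ primepi (INR p) = k.

Definition ram_prop (n r : nat) : Prop :=
  forall x : R, Rle (INR r) x -> (primepi (Rdiv x 2) + n <= primepi x)%N.

Definition is_ramanujan_R (n r : nat) : Prop :=
  (0 < r)%N /\ ram_prop n r /\ (forall r', (0 < r')%N -> ram_prop n r' -> (r <= r')%N).

Definition ramanujan_prime (p : nat) : Prop :=
  exists n, (1 <= n)%N /\ is_ramanujan_R n p.

(* Main.v *)
Require Import Defs.
From Stdlib Require Import Reals ZArith Lra Classical.
From mathcomp Require Import all_boot zify.
Delimit Scope R_scope with Re.

Definition pc (N : nat) : nat := count prime (iota 0 N.+1).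

Lemma primepi_eq (x : R) (N : nat) :
  (INR N <= x)%Re -> (x < INR N + 1)%Re -> primepi x = pc N.
Proof.
move=> h1 h2; rewrite /primepi.
have hup : up x = Z.of_nat N.+1.
  by symmetry; apply: tech_up; rewrite -INR_IZR_INZ S_INR; lra.
rewrite hup Nat2Z.id /pc; apply: eq_in_count => k; rewrite mem_iota add0n => /andP[_ hk].
case: Rle_dec => hn; first by rewrite andbT.
exfalso; apply: hn.
have : (k <= N)%coq_nat by apply/leP.
move/le_INR; lra.
Qed.

Lemma primepi_nat N : primepi (INR N) = pc N.
Proof. apply: primepi_eq; lra. Qed.

Lemma pc_S N : pc N.+1 = pc N + prime N.+1.
Proof.
rewrite /pc.
have -> : iota 0 N.+2 = iota 0 N.+1 ++ [:: N.+1] by rewrite -(iotaD 0 N.+1 1) addn1.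
by rewrite count_cat /= addn0.
Qed.

Lemma pc_mono a b : (a <= b)%N -> (pc a <= pc b)%N.
Proof.
move=> /subnK <-; elim: (b - a) => [|d IH] //.
rewrite addSn pc_S; exact: leq_trans IH (leq_addr _ _).
Qed.

Lemma pc_prime m : prime m -> pc m = (pc (m - 1)).+1.
Proof.
case: m => [|m] // pm; rewrite subn1 /= pc_S pm; lia.
Qed.

Theorem lemma2 (p n p' q : nat) :
  ramanujan_prime p -> odd p ->
  is_kth_prime n p -> is_kth_prime n.+1 p' ->
  (* q is the smallest prime greater than p/2 *)
  prime q -> (p < 2 * q)%N -> (forall r, prime r -> (p < 2 * r)%N -> (q <= r)%N) ->
  (forall m, (p.+1./2 <= m <= p'.-1./2)%N -> (1 < m)%N /\ ~~ prime m) /\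
  (exists r, prime r /\ (p < r)%N /\ (r < 2 * q)%N).
Proof.
move=> [k [hk1 [hp0 [hram hmin]]]] hodd [pp hpn] [pp' hpn'] hq hpq hqmin.
rewrite primepi_nat in hpn; rewrite primepi_nat in hpn'.
have hp : p = 2 * p./2 + 1.
  by have := odd_double_half p; rewrite hodd -muln2; lia.
have hh : p.+1./2 = (p./2).+1.
  by change (uphalf p = (p./2).+1); rewrite uphalf_half hodd.
move: (p./2) hp hh => h hp hh.
have hp1 := prime_gt1 pp.
have hp'1 := prime_gt1 pp'.
have hh1 : (1 <= h)%N.
  case: h hp {hh} => [|h] // hp; move: pp; rewrite hp => /=; by [].
have eINR : INR p = (2 * INR h + 1)%Re.
  by rewrite hp plus_INR mult_INR; simpl (INR 2); simpl (INR 1); lra.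
have hup : (pc h + k <= pc p)%N.
  have := hram (INR p) (Rle_refl _).
  rewrite primepi_nat (@primepi_eq _ h) //; lra.
have hlow : (pc p <= pc h + k)%N.
  have [x [hx1 hx2]] : exists x, (INR (p - 1) <= x)%Re /\
      ~~ (primepi (x / 2) + k <= primepi x)%N.
    apply: NNPP => hne.
    have : (p <= p - 1)%N; last by lia.
    apply: hmin; first by lia.
    move=> x hx; apply: NNPP => hn; apply: hne; exists x; split => //; exact/negP.
  have ep1 : INR (p - 1) = (2 * INR h)%Re.
    have -> : (p - 1 = 2 * h)%N by lia.
    rewrite mult_INR; simpl (INR 2); lra.
  have ep2 : INR p = (INR (p - 1) + 1)%Re by lra.
  case: (Rlt_or_le x (INR p)) => hxp; last first.
    by rewrite hram in hx2.
  rewrite (@primepi_eq x (p - 1)) in hx2; try lra.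
  rewrite (@primepi_eq _ h) in hx2; try lra.
  rewrite (@pc_prime p pp); lia.
have hkey : pc h + k = pc p by lia.
have hpcp' : pc p' = (pc (p' - 1)).+1 := @pc_prime p' pp'.
have part1 : forall m, (h.+1 <= m)%N -> (2 * m <= p' - 1)%N -> (1 < m)%N /\ ~~ prime m.
  move=> m hm1 hm2; split; first by lia.
  apply/negP => pm.
  have hpm : (p <= 2 * m)%N by lia.
  have := hram (INR (2 * m)) (le_INR _ _ (elimT leP hpm)).
  rewrite primepi_nat (@primepi_eq _ m); last first.
  - rewrite mult_INR; simpl (INR 2); lra.
  - rewrite mult_INR; simpl (INR 2); lra.
  have hhm : (h <= m - 1)%N by lia.
  have := pc_mono _ _ hm2; have := pc_mono _ _ hhm; rewrite (@pc_prime m pm).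
  lia.
split.
  move=> m /andP[hm1 hm2]; apply: part1; first by rewrite -hh.
  have := odd_double_half p'.-1; rewrite -muln2; lia.
exists p'; split => //; split.
  rewrite ltnNge; apply/negP => hle; have := pc_mono _ _ hle; lia.
rewrite ltnNge; apply/negP => hle.
have hqh : (h.+1 <= q)%N by lia.
case: (ltngtP (2 * q) p') => E.
- have hle2 : (2 * q <= p' - 1)%N by lia.
  have [_ hc] := part1 q hqh hle2.
  by rewrite hq in hc.
- lia.
- move: pp'; rewrite -E => /primeP [_ H].
  have := H 2 (dvdn_mulr q (dvdnn 2)); move/orP => [] /eqP; lia.
Qed.
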